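(* Let $\mathbf{E}\subseteq\mathbf{A}$ be finite symmetric integral relation algebras. Then the map $a\mapsto J(a,0)$ is an isomorphism from $\mathbf{A}$ onto a subalgebra $\mathbf{A}'$ of $\mathbf{C}_{\mathbf{E}}(\mathbf{A})$.
   Context: Relation algebras are in the sense of Tarski; $1'$ identity, $0'$ its complement, $;$ relative product; integral: $1'$ is an atom; symmetric: $x^{\smile}=x$; a diversity atom is an atom below $0'$. The algebra $\mathbf{C}_{\mathbf{E}}(\mathbf{A})$: for each atom $x$ of $\mathbf{A}$ let $c(x)$ be the atom of $\mathbf{E}$ with $x\le c(x)$. Let $T(i,j,k)$, for $i,j,k\in\omega$, hold iff $(i\le j=k)$ or $(j\le k=i)$ or $(k\le i=j)$. Let $At=\{1'\}\cup\{x^{(i)}:x$ a diversity atom of $\mathbf{A}$, $i\in\omega\}$ (distinct formal symbols). Let $C\subseteq At^3$ consist of all permutations of $(1',1',1')$, $(1',x^{(i)},x^{(i)})$, and $(x^{(i)},y^{(j)},z^{(k)})$ where $x,y,z$ are diversity atoms of $\mathbf{A}$ with $x;y\ge z$ in $\mathbf{A}$ and, if $c(x)=c(y)=c(z)$, then $T(i,j,k)$. $\mathbf{C}_{\mathbf{E}}(\mathbf{A})$ is the algebra of all subsets of $At$ with set-theoretic Boolean operations, identity $\{1'\}$, converse the identity map, and $X;Y=\{w:\exists u\in X,\exists v\in Y,(u,v,w)\in C\}$ (a complete atomic non-associative relation algebra with atoms the elements of $At$). For $a\in\mathbf{A}$ and $n\in\omega$, $J(a,n)$ is the join of all $x^{(i)}$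 with $x$ a diversity atom of $\mathbf{A}$, $x\le a$, $n\le i\in\omega$, together with $1'$ if $1'\le a$. *)

(* Defs.v *)
From mathcomp Require Import all_boot.
Set Implicit Arguments.
Unset Strict Implicit.
Unset Printing Implicit Defensive.

(* Relation algebras in the sense of Tarski: the ten axioms R1-R10,
   with Boolean join (+) and complement (-) as primitives. *)
Record RA := {
  ra_car :> finType;
  ra_join : ra_car -> ra_car -> ra_car;
  ra_compl : ra_car -> ra_car;
  ra_comp : ra_car -> ra_car -> ra_car;
  ra_conv : ra_car -> ra_car;
  ra_id : ra_car;
  ax_R1 : forall x y, ra_join x y = ra_join y x;
  ax_R2 : forall x y z, ra_join x (ra_join y z) = ra_join (ra_join x y) z;
  ax_R3 : forall x y,
    ra_join (ra_compl (ra_join (ra_compl x) y))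
            (ra_compl (ra_join (ra_compl x) (ra_compl y))) = x;
  ax_R4 : forall x y z, ra_comp x (ra_comp y z) = ra_comp (ra_comp x y) z;
  ax_R5 : forall x y z, ra_comp (ra_join x y) z = ra_join (ra_comp x z) (ra_comp y z);
  ax_R6 : forall x, ra_comp x ra_id = x;
  ax_R7 : forall x, ra_conv (ra_conv x) = x;
  ax_R8 : forall x y, ra_conv (ra_join x y) = ra_join (ra_conv x) (ra_conv y);
  ax_R9 : forall x y, ra_conv (ra_comp x y) = ra_comp (ra_conv y) (ra_conv x);
  ax_R10 : forall x y,
    ra_join (ra_comp (ra_conv x) (ra_compl (ra_comp x y))) (ra_compl y) = ra_compl y
}.

Section RADefs.
Variable A : RA.

Definition ra_zero : A := ra_compl (ra_join (ra_id A) (ra_compl (ra_id A))).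
Definition ra_le (x y : A) : Prop := ra_join x y = y.
Definition ra_diversity : A := ra_compl (ra_id A).

Definition is_atom (x : A) : Prop :=
  x <> ra_zero /\ forall y, ra_le y x -> y = ra_zero \/ y = x.
Definition is_div_atom (x : A) : Prop := is_atom x /\ ra_le x ra_diversity.

Definition ra_integral : Prop := is_atom (ra_id A).
Definition ra_symmetric : Prop := forall x : A, ra_conv x = x.

Definition ra_subalgebra (E : A -> Prop) : Prop :=
  E (ra_id A) /\
  (forall x y, E x -> E y -> E (ra_join x y)) /\
  (forall x, E x -> E (ra_compl x)) /\
  (forall x y, E x -> E y -> E (ra_comp x y)) /\
  (forall x, E x -> E (ra_conv x)).

Definition is_atom_in (E : A -> Prop) (e : A) : Prop :=
  E e /\ e <> ra_zero /\ forall y, E y -> ra_le y e -> y = ra_zero \/ y = e.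

End RADefs.

Section CEA.
Variables (A : RA) (E : A -> Prop).

Definition divatom := { x : A | is_div_atom x }.

(* At = {1'} ∪ { x^(i) : x diversity atom, i ∈ ω } *)
Inductive atC : Type :=
| CId : atC
| CDv : divatom -> nat -> atC.

Definition Tnat (i j k : nat) : Prop :=
  (i <= j /\ j = k)%coq_nat \/ (j <= k /\ k = i)%coq_nat \/ (k <= i /\ i = j)%coq_nat.

(* c(x) = c(y) = c(z): the E-atoms above x, y, z coincide
   (there is a single E-atom above all three) *)
Definition same_c (x y z : A) : Prop :=
  exists e, is_atom_in E e /\ ra_le x e /\ ra_le y e /\ ra_le z e.

(* generating triples (before closing under permutations) *)
Definition base_cyc (u v w : atC) : Prop :=
  match u, v, w with
  | CId, _, _ => v = w                       (* (1',1',1') and (1',x^i,x^i) *)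
  | CDv x i, CDv y j, CDv z k =>
      ra_le (proj1_sig z) (ra_comp (proj1_sig x) (proj1_sig y)) /\
      (same_c (proj1_sig x) (proj1_sig y) (proj1_sig z) -> Tnat i j k)
  | _, _, _ => False
  end.

Definition Ccyc (u v w : atC) : Prop :=
  base_cyc u v w \/ base_cyc u w v \/ base_cyc v u w \/
  base_cyc v w u \/ base_cyc w u v \/ base_cyc w v u.

Definition CE := atC -> Prop.

Definition C_join (X Y : CE) : CE := fun w => X w \/ Y w.
Definition C_compl (X : CE) : CE := fun w => ~ X w.
Definition C_id : CE := fun w => w = CId.
Definition C_conv (X : CE) : CE := X.
Definition C_comp (X Y : CE) : CE :=
  fun w => exists u v, X u /\ Y v /\ Ccyc u v w.

Definition J (a : A) (n : nat) : CE :=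
  fun w => match w with
           | CId => ra_le (ra_id A) a
           | CDv x i => ra_le (proj1_sig x) a /\ (n <= i)%coq_nat
           end.

Definition C_subalgebra (S : CE -> Prop) : Prop :=
  S C_id /\
  (forall X Y, S X -> S Y -> S (C_join X Y)) /\
  (forall X, S X -> S (C_compl X)) /\
  (forall X Y, S X -> S Y -> S (C_comp X Y)) /\
  (forall X, S X -> S (C_conv X)).

End CEA.

(* Main.v *)
Require Import Defs.
From mathcomp Require Import all_boot.
From Stdlib Require Import Classical FunctionalExtensionality PropExtensionality.

Lemma B1' (A : RA) (x y : A) :
  @ra_join A x (@ra_compl A x) = @ra_join A y (@ra_compl A y).
Proof.
  pose proof (@ax_R3 A x y).
  pose proof (@ax_R3 A x (@ra_compl A y)).
  pose proof (@ax_R3 A (@ra_compl A x) (@ra_compl A y)).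
  pose proof (@ax_R3 A y (@ra_compl A x)).
  pose proof (@ax_R3 A (@ra_compl A y) (@ra_compl A x)).
  pose proof (@ax_R2 A x (@ra_compl A (@ra_join A (@ra_compl A (@ra_compl A x)) (@ra_compl A y))) (@ra_compl A (@ra_join A (@ra_compl A (@ra_compl A x)) (@ra_compl A (@ra_compl A y))))).
  pose proof (@ax_R2 A y (@ra_compl A (@ra_join A (@ra_compl A (@ra_compl A y)) (@ra_compl A x))) (@ra_compl A (@ra_join A (@ra_compl A (@ra_compl A y)) (@ra_compl A (@ra_compl A x))))).
  pose proof (@ax_R1 A (@ra_compl A (@ra_join A (@ra_compl A x) (@ra_compl A y))) (@ra_compl A (@ra_join A (@ra_compl A x) (@ra_compl A (@ra_compl A y))))).
  pose proof (@ax_R1 A (@ra_compl A x) y).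
  pose proof (@ax_R1 A (@ra_compl A x) (@ra_compl A y)).
  pose proof (@ax_R1 A (@ra_compl A x) (@ra_compl A (@ra_compl A y))).
  pose proof (@ax_R1 A (@ra_compl A (@ra_compl A x)) (@ra_compl A y)).
  pose proof (@ax_R1 A (@ra_compl A (@ra_compl A x)) (@ra_compl A (@ra_compl A y))).
  pose proof (@ax_R1 A (@ra_compl A (@ra_join A (@ra_compl A y) x)) (@ra_compl A (@ra_join A (@ra_compl A y) (@ra_compl A x)))).
  pose proof (@ax_R3 A y x).
  pose proof (esym (@ax_R2 A (@ra_compl A (@ra_join A y (@ra_compl A x))) (@ra_compl A (@ra_join A (@ra_compl A y) (@ra_compl A x))) (@ra_compl A (@ra_join A (@ra_compl A y) (@ra_compl A (@ra_compl A x)))))).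
  pose proof (@ax_R1 A y (@ra_compl A (@ra_join A (@ra_compl A (@ra_compl A y)) (@ra_compl A x)))).
  pose proof (@ax_R2 A (@ra_compl A (@ra_join A (@ra_compl A (@ra_compl A y)) (@ra_compl A x))) (@ra_compl A (@ra_join A (@ra_compl A y) (@ra_compl A x))) (@ra_compl A (@ra_join A (@ra_compl A y) x))).
  pose proof (@ax_R2 A (@ra_compl A (@ra_join A y (@ra_compl A x))) (@ra_compl A (@ra_join A (@ra_compl A x) (@ra_compl A y))) (@ra_compl A (@ra_join A (@ra_compl A y) x))).
  congruence.
Qed.

Definition ra_top (A : RA) : A := @ra_join A (ra_id A) (@ra_compl A (ra_id A)).

Lemma B1 (A : RA) (x : A) : @ra_join A x (@ra_compl A x) = ra_top A.
Proof. exact (B1' A x (ra_id A)). Qed.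

Lemma B3 (A : RA) (x : A) : @ra_join A x x = x.
Proof.
  pose proof (esym (@ax_R2 A (@ra_compl A (@ra_join A (@ra_compl A (@ra_compl A (ra_top A))) (ra_top A))) (@ra_compl A (@ra_join A (@ra_compl A (@ra_compl A (ra_top A))) (@ra_compl A (ra_top A)))) (@ra_compl A (@ra_compl A (ra_top A))))).
  pose proof (@B1 A (@ra_compl A (ra_top A))).
  pose proof (@ax_R3 A x (@ra_compl A (@ra_compl A x))).
  pose proof (@ax_R3 A x (@ra_compl A (ra_top A))).
  pose proof (@ax_R3 A (@ra_join A x x) (@ra_compl A x)).
  pose proof (@ax_R3 A (ra_top A) (@ra_compl A (@ra_compl A (ra_top A)))).
  pose proof (@ax_R3 A (@ra_compl A x) (@ra_compl A (@ra_compl A x))).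
  pose proof (@ax_R3 A (@ra_compl A (ra_top A)) (@ra_compl A (@ra_compl A (ra_top A)))).
  pose proof (@ax_R2 A (@ra_compl A (@ra_join A (@ra_compl A (@ra_compl A x)) x)) (@ra_compl A (@ra_join A (ra_top A) (@ra_compl A (@ra_compl A (ra_top A))))) (@ra_join A (@ra_compl A (@ra_compl A x)) (@ra_compl A (ra_top A)))).
  pose proof (@ax_R3 A (@ra_join A (ra_top A) (@ra_compl A (@ra_compl A (ra_top A)))) (ra_top A)).
  pose proof (@ax_R1 A (@ra_compl A x) (@ra_compl A (@ra_compl A (@ra_compl A x)))).
  pose proof (esym (@ax_R2 A (@ra_compl A (@ra_join A (@ra_compl A (@ra_compl A x)) x)) (@ra_compl A (ra_top A)) (@ra_compl A (@ra_compl A (@ra_compl A x))))).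
  pose proof (@ax_R1 A (@ra_compl A x) (@ra_compl A (@ra_compl A (@ra_compl A (ra_top A))))).
  pose proof (esym (@ax_R2 A (@ra_compl A (@ra_join A (@ra_compl A (@ra_compl A x)) (@ra_compl A (@ra_compl A x)))) (@ra_compl A (ra_top A)) (@ra_compl A (@ra_compl A (@ra_compl A (ra_top A)))))).
  pose proof (@ax_R1 A (@ra_compl A (ra_top A)) (@ra_compl A (@ra_compl A (@ra_compl A (ra_top A))))).
  pose proof (@ax_R1 A (@ra_compl A (@ra_join A (@ra_compl A (@ra_compl A (@ra_compl A x))) (@ra_compl A x))) (@ra_compl A (@ra_join A (@ra_compl A (@ra_compl A (@ra_compl A x))) (@ra_compl A (@ra_compl A x))))).
  pose proof (@ax_R3 A (@ra_compl A (@ra_compl A x)) (@ra_compl A x)).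
  pose proof (@ax_R1 A (@ra_compl A (@ra_compl A (@ra_compl A x))) (@ra_compl A (@ra_compl A x))).
  pose proof (@B1 A (@ra_compl A (@ra_compl A x))).
  pose proof (@ax_R2 A (@ra_compl A (@ra_compl A (@ra_compl A (ra_top A)))) (@ra_compl A (@ra_join A (@ra_compl A (ra_top A)) (@ra_compl A x))) (@ra_compl A (@ra_join A (@ra_compl A x) (ra_top A)))).
  pose proof (@ax_R2 A (@ra_compl A (@ra_compl A (@ra_compl A (ra_top A)))) (@ra_compl A (ra_top A)) (@ra_compl A (@ra_join A (@ra_compl A x) (@ra_compl A (@ra_compl A (@ra_compl A x)))))).
  pose proof (@ax_R2 A (@ra_compl A (@ra_compl A (@ra_compl A (ra_top A)))) (@ra_compl A (@ra_join A (@ra_compl A x) (@ra_compl A x))) (@ra_compl A (ra_top A))).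
  pose proof (@ax_R1 A (@ra_compl A (@ra_join A (@ra_compl A (@ra_compl A (@ra_compl A (ra_top A)))) (@ra_compl A (ra_top A)))) (@ra_compl A (@ra_join A (@ra_compl A (@ra_compl A (@ra_compl A (ra_top A)))) (@ra_compl A (@ra_compl A (ra_top A)))))).
  pose proof (@ax_R3 A (@ra_compl A (@ra_compl A (ra_top A))) (@ra_compl A (ra_top A))).
  pose proof (@ax_R1 A (@ra_compl A (@ra_compl A (@ra_compl A (ra_top A)))) (@ra_compl A (@ra_compl A (ra_top A)))).
  pose proof (@B1 A (@ra_compl A (@ra_compl A (ra_top A)))).
  pose proof (@ax_R3 A (ra_top A) x).
  congruence.
Qed.

Lemma B2 (A : RA) (x : A) : @ra_compl A (@ra_compl A x) = x.
Proof.
  pose proof (@ax_R3 A x (@ra_compl A (@ra_compl A x))).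
  pose proof (@ax_R3 A (@ra_compl A (@ra_compl A x)) (@ra_compl A x)).
  pose proof (@ax_R1 A (@ra_compl A (@ra_join A (@ra_compl A x) (@ra_compl A (@ra_compl A x)))) (@ra_compl A (@ra_join A (@ra_compl A x) (@ra_compl A (@ra_compl A (@ra_compl A x)))))).
  pose proof (@B1 A (@ra_compl A x)).
  pose proof (@ax_R1 A (@ra_compl A x) (@ra_compl A (@ra_compl A (@ra_compl A x)))).
  pose proof (@ax_R1 A (@ra_compl A (@ra_compl A x)) (@ra_compl A (@ra_compl A (@ra_compl A x)))).
  pose proof (@B1 A (@ra_compl A (@ra_compl A x))).
  congruence.
Qed.
Set Implicit Arguments.
Unset Strict Implicit.

Notation jn := (@ra_join _).
Notation cp := (@ra_compl _).
Notation cmp := (@ra_comp _).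

Definition mt (A : RA) (x y : A) : A := cp (jn (cp x) (cp y)).

Lemma jC (A : RA) (x y : A) : jn x y = jn y x. Proof. exact: ax_R1. Qed.
Lemma jA (A : RA) (x y z : A) : jn x (jn y z) = jn (jn x y) z. Proof. exact: ax_R2. Qed.

Lemma zero_top (A : RA) : ra_zero A = cp (ra_top A). Proof. reflexivity. Qed.

Lemma B5 (A : RA) (x : A) : jn x (ra_zero A) = x.
Proof.
  have H := @ax_R3 A x (cp x).
  rewrite B2 B3 (jC (cp x) x) B1 B2 in H.
  by rewrite zero_top.
Qed.

Lemma Hm (A : RA) (x y : A) : jn (mt x y) (mt x (cp y)) = x.
Proof.
  rewrite /mt. exact: ax_R3.
Qed.

Lemma le_refl (A : RA) (x : A) : ra_le x x. Proof. exact: B3. Qed.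
Lemma le_trans (A : RA) (x y z : A) : ra_le x y -> ra_le y z -> ra_le x z.
Proof. rewrite /ra_le => H1 H2. by rewrite -H2 jA H1. Qed.
Lemma le_antisym (A : RA) (x y : A) : ra_le x y -> ra_le y x -> x = y.
Proof. rewrite /ra_le => H1 H2. by rewrite -H1 jC H2. Qed.
Lemma le_jl (A : RA) (x y : A) : ra_le x (jn x y).
Proof. by rewrite /ra_le jA B3. Qed.
Lemma le_jr (A : RA) (x y : A) : ra_le y (jn x y).
Proof. rewrite jC. exact: le_jl. Qed.
Lemma join_lub (A : RA) (x y z : A) : ra_le x z -> ra_le y z -> ra_le (jn x y) z.
Proof. rewrite /ra_le => H1 H2. by rewrite -jA H2 H1. Qed.
Lemma mtC (A : RA) (x y : A) : mt x y = mt y x. Proof. by rewrite /mt jC. Qed.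
Lemma mt_le_l (A : RA) (x y : A) : ra_le (mt x y) x.
Proof. rewrite -{2}(Hm x y). exact: le_jl. Qed.
Lemma mt_le_r (A : RA) (x y : A) : ra_le (mt x y) y.
Proof. rewrite mtC. exact: mt_le_l. Qed.
Lemma cp_anti (A : RA) (x y : A) : ra_le x y -> ra_le (cp y) (cp x).
Proof.
  rewrite /ra_le => H.
  have E := Hm (cp x) y.
  have E2 : mt (cp x) (cp y) = cp y by rewrite /mt !B2 H.
  rewrite E2 in E.
  by rewrite -E jA (jC (cp y)) -jA B3.
Qed.
Lemma cp_anti_iff (A : RA) (x y : A) : ra_le (cp y) (cp x) -> ra_le x y.
Proof. move=> H. have := cp_anti H. by rewrite !B2. Qed.
Lemma mt_glb (A : RA) (x y z : A) : ra_le z x -> ra_le z y -> ra_le z (mt x y).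
Proof.
  move=> H1 H2. apply: cp_anti_iff. rewrite /mt B2.
  apply: join_lub; exact: cp_anti.
Qed.
Lemma zero_le (A : RA) (x : A) : ra_le (ra_zero A) x.
Proof. by rewrite /ra_le jC B5. Qed.
Lemma mt_compl (A : RA) (x : A) : mt x (cp x) = ra_zero A.
Proof. by rewrite /mt B2 jC B1. Qed.
Lemma mt_compl' (A : RA) (x : A) : mt (cp x) x = ra_zero A.
Proof. by rewrite mtC mt_compl. Qed.
Lemma le_zero (A : RA) (x : A) : ra_le x (ra_zero A) -> x = ra_zero A.
Proof. move=> H. apply: le_antisym => //. exact: zero_le. Qed.
Lemma le_mt_zero (A : RA) (x y : A) : mt x (cp y) = ra_zero A -> ra_le x y.
Proof.
  move=> H. have E := Hm x y. rewrite H B5 in E. rewrite -E. exact: mt_le_r.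
Qed.
Lemma mt_mono (A : RA) (a a' b b' : A) :
  ra_le a a' -> ra_le b b' -> ra_le (mt a b) (mt a' b').
Proof.
  move=> H1 H2. apply: mt_glb.
  - exact: le_trans (mt_le_l _ _) H1.
  - exact: le_trans (mt_le_r _ _) H2.
Qed.

Lemma atom_nz (A : RA) (x : A) : is_atom x -> x <> ra_zero A.
Proof. by case. Qed.

Lemma atom_dec (A : RA) (x a : A) : is_atom x -> ra_le x a \/ ra_le x (cp a).
Proof.
  case=> nz H. case: (H (mt x a) (mt_le_l _ _)) => E.
  - right. apply: le_mt_zero. by rewrite B2.
  - left. rewrite -E. exact: mt_le_r.
Qed.

Lemma atom_not_both (A : RA) (x a : A) :
  is_atom x -> ra_le x a -> ra_le x (cp a) -> False.
Proof.
  move=> [nz _] H1 H2. apply: nz. apply: le_zero.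
  rewrite -(mt_compl a). exact: mt_glb.
Qed.

Lemma atom_cp_iff (A : RA) (x a : A) :
  is_atom x -> (ra_le x (cp a) <-> ~ ra_le x a).
Proof.
  move=> Ha. split.
  - move=> H1 H2. exact: atom_not_both Ha H2 H1.
  - move=> H. by case: (atom_dec a Ha).
Qed.

Lemma atom_join (A : RA) (x a b : A) :
  is_atom x -> (ra_le x (jn a b) <-> ra_le x a \/ ra_le x b).
Proof.
  move=> Ha. split.
  - move=> H. case: (atom_dec a Ha) => Ha'; first by left.
    case: (atom_dec b Ha) => Hb'; first by right.
    exfalso. apply: (atom_not_both Ha H).
    have := mt_glb Ha' Hb'. by rewrite /mt !B2.
  - case=> H.
    + exact: le_trans H (le_jl _ _).
    + exact: le_trans H (le_jr _ _).
Qed.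

Lemma atom_mt (A : RA) (x c : A) :
  is_atom x -> (ra_le x c <-> mt c x <> ra_zero A).
Proof.
  move=> [nz H]. split.
  - move=> Hc E. apply: nz. apply: le_zero. rewrite -E.
    apply: mt_glb => //. exact: le_refl.
  - move=> Hn. case: (H (mt c x) (mt_le_r _ _)) => E; first by [].
    rewrite -E. exact: mt_le_l.
Qed.

Lemma atoms_eq (A : RA) (p q : A) :
  is_atom p -> is_atom q -> mt p q <> ra_zero A -> p = q.
Proof.
  move=> Hp Hq Hn.
  have Hpq : ra_le q p by apply/(atom_mt p Hq).
  case: Hp => _ H. case: (H q Hpq) => // E. by case: Hq.
Qed.

Definition leb (A : RA) (x y : A) : bool := jn x y == y.

Lemma lebP (A : RA) (x y : A) : reflect (ra_le x y) (leb x y).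
Proof. exact: eqP. Qed.

Lemma atom_below (A : RA) (x : A) :
  x <> ra_zero A -> exists t, is_atom t /\ ra_le t x.
Proof.
  move: {2}#|[pred z | leb z x]| (leqnn #|[pred z | leb z x]|) => n.
  elim: n x => [|n IH] x Hc Hx.
  - exfalso. move: Hc. rewrite leqn0 => /eqP /card0_eq /(_ x).
    rewrite inE. move/lebP. apply. exact: le_refl.
  - case: (classic (is_atom x)) => Hat.
      by exists x; split => //; exact: le_refl.
    have [y [Hyx [Hy0 Hyx']]] : exists y, ra_le y x /\ y <> ra_zero A /\ y <> x.
      apply: NNPP => Hn. apply: Hat. split => // y Hy.
      apply: NNPP => Hn2. apply: Hn. exists y. split => //. split.
      + by move=> E; apply: Hn2; left.
      + by move=> E; apply: Hn2; right.
    have Hlt : #|[pred z | leb z y]| < #|[pred z | leb z x]|.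
      apply: proper_card. apply/properP. split.
      + apply/subsetP => z. rewrite !inE => /lebP H. apply/lebP. exact: le_trans H Hyx.
      + exists x; rewrite !inE; first by apply/lebP; exact: le_refl.
        apply/negP => /lebP H. apply: Hyx'. exact: le_antisym.
    have [t [Ht Hty]] := IH y (leq_trans (leq_trans Hlt Hc) (leqnn _)) Hy0.
    exists t. split => //. exact: le_trans Hty Hyx.
Qed.

Lemma ext_atoms (A : RA) (a b : A) :
  (forall t, is_atom t -> (ra_le t a <-> ra_le t b)) -> a = b.
Proof.
  move=> H.
  have K : forall a b : A, (forall t, is_atom t -> ra_le t a -> ra_le t b) -> ra_le a b.
    move=> p q Hpq. apply: le_mt_zero. apply: NNPP => Hn.
    have [t [Ht Htm]] := atom_below Hn.
    have H1 := Hpq t Ht (le_trans Htm (mt_le_l _ _)).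
    exact: atom_not_both Ht H1 (le_trans Htm (mt_le_r _ _)).
  apply: le_antisym; apply: K => t Ht; by move/(H t Ht).
Qed.

Lemma atom_class (A : RA) (x : A) :
  ra_integral A -> is_atom x -> x = ra_id A \/ is_div_atom x.
Proof.
  move=> Hi Hx. case: (atom_dec (ra_id A) Hx) => H.
  - left. case: Hi => _ Hi. case: (Hi x H) => // E. by case: Hx.
  - right. by split.
Qed.

Lemma cmpC (A : RA) (x y : A) : ra_symmetric A -> cmp x y = cmp y x.
Proof.
  move=> S. have := @ax_R9 A x y. by rewrite !S.
Qed.
Lemma cmp_id_r (A : RA) (x : A) : cmp x (ra_id A) = x. Proof. exact: ax_R6. Qed.
Lemma cmp_id_l (A : RA) (x : A) : ra_symmetric A -> cmp (ra_id A) x = x.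
Proof. move=> S. by rewrite cmpC // cmp_id_r. Qed.
Lemma cmp_mono_l (A : RA) (x y z : A) : ra_le x y -> ra_le (cmp x z) (cmp y z).
Proof. rewrite /ra_le => H. by rewrite -ax_R5 H. Qed.
Lemma cmp_mono_r (A : RA) (x y z : A) :
  ra_symmetric A -> ra_le x y -> ra_le (cmp z x) (cmp z y).
Proof. move=> S H. rewrite !(cmpC z) //. exact: cmp_mono_l. Qed.

Definition NZ (A : RA) (x y z : A) : Prop := mt (cmp x y) z <> ra_zero A.

Lemma schroder (A : RA) (x y z : A) :
  ra_symmetric A -> mt (cmp x y) z = ra_zero A -> mt (cmp x z) y = ra_zero A.
Proof.
  move=> S H. apply: le_zero.
  have R10 : ra_le (cmp x (cp (cmp x y))) (cp y).
    have := @ax_R10 A x y. by rewrite S.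
  have Hz : ra_le z (cp (cmp x y)).
    apply: le_mt_zero. by rewrite B2 mtC.
  have := mt_mono (le_trans (cmp_mono_r x S Hz) R10) (le_refl y).
  by rewrite mt_compl'.
Qed.

Lemma nz23 (A : RA) (x y z : A) : ra_symmetric A -> NZ x y z -> NZ x z y.
Proof. move=> S H E. apply: H. exact: schroder E. Qed.
Lemma nz12 (A : RA) (x y z : A) : ra_symmetric A -> NZ x y z -> NZ y x z.
Proof. move=> S. by rewrite /NZ cmpC. Qed.

Lemma nz_mono (A : RA) (x y z x' y' : A) : ra_symmetric A ->
  ra_le x x' -> ra_le y y' -> NZ x y z -> NZ x' y' z.
Proof.
  move=> S H1 H2 H E. apply: H. apply: le_zero. rewrite -E.
  apply: mt_mono (le_refl _).
  exact: le_trans (cmp_mono_l y H1) (cmp_mono_r x' S H2).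
Qed.

Lemma mt_idem (A : RA) (x : A) : mt x x = x.
Proof. by rewrite /mt B3 B2. Qed.

Definition atom_of (A : RA) (u : atC A) : A :=
  match u with CId => ra_id A | CDv x _ => proj1_sig x end.

Lemma atom_of_atom (A : RA) (u : atC A) : ra_integral A -> is_atom (atom_of u).
Proof. move=> Hi. case: u => [|[x [Hx _]] i] //. Qed.

Lemma J0_iff (A : RA) (a : A) (u : atC A) : J a 0 u <-> ra_le (atom_of u) a.
Proof.
  case: u => [|x i] /=; first by [].
  split; [by case | move=> H; split => //; exact: le_0_n].
Qed.

Lemma base_nz (A : RA) (E : A -> Prop) (u v w : atC A) :
  ra_integral A -> ra_symmetric A -> base_cyc E u v w ->
  NZ (atom_of u) (atom_of v) (atom_of w).
Proof.
  move=> Hi S. case: u => [|x i].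
  - move=> /= ->. rewrite /NZ cmp_id_l // mt_idem. apply: atom_nz. exact: atom_of_atom.
  - case: v => [|y j] //; case: w => [|z k] //= [H _].
    rewrite /NZ. exact/(atom_mt _ (proj1 (proj2_sig z))).
Qed.

Lemma ccyc_nz (A : RA) (E : A -> Prop) (u v w : atC A) :
  ra_integral A -> ra_symmetric A -> Ccyc E u v w ->
  NZ (atom_of u) (atom_of v) (atom_of w).
Proof.
  move=> Hi S.
  case=> [|[|[|[|[|]]]]] /(base_nz Hi S) H.
  - exact: H.
  - exact: nz23.
  - exact: nz12.
  - apply: nz23 => //. apply: nz12 => //. apply: nz23 => //. exact: nz12.
  - apply: nz23 => //. exact: nz12.
  - apply: nz23 => //. apply: nz12 => //. exact: nz23.
Qed.

Lemma ccyc_of (A : RA) (E : A -> Prop) (x y : A) (w : atC A) :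
  ra_integral A -> ra_symmetric A -> is_atom x -> is_atom y ->
  NZ x y (atom_of w) ->
  exists u v, atom_of u = x /\ atom_of v = y /\ Ccyc E u v w.
Proof.
  move=> Hi S Hx Hy H.
  have Hw := atom_of_atom w Hi.
  case: (atom_class Hi Hx) => [Ex|Dx].
  - rewrite Ex /NZ cmp_id_l // in H.
    have Ey := atoms_eq Hy Hw H.
    exists (CId A), w. split => //. split => //. by left.
  case: (atom_class Hi Hy) => [Ey|Dy].
  - rewrite Ey /NZ cmp_id_r in H.
    have Ex := atoms_eq Hx Hw H.
    exists w, (CId A). split => //. split => //. by right; right; left.
  case: w Hw H => [|z k] Hw H.
  - have H' := nz23 S H. rewrite /NZ cmp_id_r in H'.
    have Exy := atoms_eq Hx Hy H'.
    exists (CDv (exist _ x Dx) 0), (CDv (exist _ x Dx) 0). split => //. split => //.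
    by right; right; right; right; left.
  - exists (CDv (exist _ x Dx) k), (CDv (exist _ y Dy) k). split => //. split => //.
    left. split.
    + exact/(atom_mt _ (proj1 (proj2_sig z))).
    + move=> _. left. split => //.
Qed.

Lemma CE_ext (A : RA) (X Y : CE A) : (forall w, X w <-> Y w) -> X = Y.
Proof.
  move=> H. apply: functional_extensionality => w. apply: propositional_extensionality. exact: H.
Qed.

Lemma J_join (A : RA) (a b : A) : ra_integral A ->
  J (jn a b) 0 = C_join (J a 0) (J b 0).
Proof.
  move=> Hi. apply: CE_ext => w. rewrite /C_join !J0_iff. apply: atom_join. exact: atom_of_atom.
Qed.

Lemma J_compl (A : RA) (a : A) : ra_integral A ->
  J (cp a) 0 = C_compl (J a 0).
Proof.
  move=> Hi. apply: CE_ext => w. rewrite /C_compl !J0_iff. apply: atom_cp_iff. exact: atom_of_atom.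
Qed.

Lemma J_id (A : RA) : ra_integral A -> J (ra_id A) 0 = @C_id A.
Proof.
  move=> Hi. apply: CE_ext => w. rewrite /C_id J0_iff. case: w => [|[x [Hx Hd]] i] /=.
  - split => // _. exact: le_refl.
  - split => // H. exfalso. exact: atom_not_both Hx H Hd.
Qed.

Lemma J_comp (A : RA) (E : A -> Prop) (a b : A) : ra_integral A -> ra_symmetric A ->
  J (cmp a b) 0 = C_comp E (J a 0) (J b 0).
Proof.
  move=> Hi S. apply: CE_ext => w. rewrite J0_iff /C_comp.
  have Hw := atom_of_atom w Hi.
  split.
  - move=> H.
    have N1 : NZ a b (atom_of w) by apply/(atom_mt _ Hw).
    have N2 := nz23 S N1.
    have [y [Hy Hyl]] := atom_below N2.
    have Hyb : ra_le y b := le_trans Hyl (mt_le_r _ _).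
    have N3 : NZ a (atom_of w) y by apply/(atom_mt _ Hy); exact: le_trans Hyl (mt_le_l _ _).
    have N4 : NZ y (atom_of w) a.
      apply: nz12 => //. apply: nz23 => //. exact: nz12.
    have [x [Hx Hxl]] := atom_below N4.
    have Hxa : ra_le x a := le_trans Hxl (mt_le_r _ _).
    have N5 : NZ y (atom_of w) x by apply/(atom_mt _ Hx); exact: le_trans Hxl (mt_le_l _ _).
    have N6 : NZ x y (atom_of w).
      apply: nz12 => //. exact: nz23.
    have [u [v [Eu [Ev Hc]]]] := ccyc_of E Hi S Hx Hy N6.
    exists u, v. rewrite !J0_iff Eu Ev. by split.
  - case=> u [v [Hu [Hv Hc]]]. rewrite J0_iff in Hu. rewrite J0_iff in Hv.
    have N := ccyc_nz Hi S Hc.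
    have N' := nz_mono S Hu Hv N.
    exact/(atom_mt _ Hw).
Qed.

Lemma J_conv (A : RA) (a : A) : ra_symmetric A -> J (ra_conv a) 0 = C_conv (J a 0).
Proof. move=> S. by rewrite S. Qed.

Lemma J_inj (A : RA) (a b : A) : ra_integral A -> J a 0 = J b 0 -> a = b.
Proof.
  move=> Hi H. apply: ext_atoms => t Ht.
  have K : forall u, atom_of u = t -> (ra_le t a <-> ra_le t b).
    move=> u <-. have Ha := J0_iff a u. have Hb := J0_iff b u. rewrite H in Ha. tauto.
  case: (atom_class Hi Ht) => [Et|Dt].
  - exact: (K (CId A)).
  - exact: (K (CDv (exist _ t Dt) 0)).
Qed.

Theorem lemma2 (A : RA) (E : A -> Prop) :
  ra_integral A -> ra_symmetric A ->
  ra_subalgebra E ->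
  let A' : CE A -> Prop := fun X => exists a : A, X = J a 0 in
  C_subalgebra E A' /\
  (forall a b : A, J a 0 = J b 0 -> a = b) /\
  J (ra_id A) 0 = @C_id A /\
  (forall a b : A, J (ra_join a b) 0 = C_join (J a 0) (J b 0)) /\
  (forall a : A, J (ra_compl a) 0 = C_compl (J a 0)) /\
  (forall a b : A, J (ra_comp a b) 0 = C_comp E (J a 0) (J b 0)) /\
  (forall a : A, J (ra_conv a) 0 = C_conv (J a 0)).
Proof.
  move=> Hi S _ A'.
  split; last first.
    split; first by move=> a b; exact: J_inj.
    split; first exact: J_id.
    split; first by move=> a b; exact: J_join.
    split; first by move=> a; exact: J_compl.
    split; first by move=> a b; exact: J_comp.
    by move=> a; exact: J_conv.
  split; first by exists (ra_id A); rewrite J_id.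
  split; first by move=> X Y [a ->] [b ->]; exists (jn a b); rewrite J_join.
  split; first by move=> X [a ->]; exists (cp a); rewrite J_compl.
  split; first by move=> X Y [a ->] [b ->]; exists (cmp a b); rewrite (J_comp E).
  by move=> X [a ->]; exists a.
Qed.
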